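(* Let $q>0$ and $r\ge 0$ be real numbers. For every integer $n\ge 0$, $$\sum_{j=0}^n (-1)^n\, w(n,j)\,B_j^q(r)=\frac{n!}{n+1},$$ where $w(n,j)=w_{q,r}(n,j)$ and $B_j^q(r)$ are as defined in the context.
   Context: The Bernoulli polynomials with a $q$ parameter $B_n^q(r)$ are defined by the formal power series identity in $t$ $$\sum_{n=0}^{\infty}B_n^q(r)\frac{t^n}{n!}=\frac{q\,e^{rt}}{1-e^{qt}}\sum_{k=1}^{\infty}\left(\frac{1-e^{qt}}{q}\right)^k\frac{1}{k}.$$ Let $(x)_k=x(x-1)\cdots(x-k+1)$ denote the falling factorial ($(x)_0=1$). The $r$-Whitney numbers of the first kind $w(n,k)=w_{q,r}(n,k)$, $0\le k\le n$, are defined by the polynomial identity in $x$: $q^n(x)_n=\sum_{k=0}^n w(n,k)\,(qx+r)^k$. *)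

(* Defs.v *)
From mathcomp Require Import all_boot all_order all_algebra.
From mathcomp Require Import reals.
Set Implicit Arguments. Unset Strict Implicit. Unset Printing Implicit Defensive.
Import Order.TTheory GRing.Theory Num.Theory.
Local Open Scope ring_scope.

Section FPS.
Variable R : realType.

Definition fps := nat -> R.

Definition fps_const (c : R) : fps := fun n => if n is 0 then c else 0.
Definition fps_add (f g : fps) : fps := fun n => f n + g n.
Definition fps_opp (f : fps) : fps := fun n => - f n.
Definition fps_scale (c : R) (f : fps) : fps := fun n => c * f n.
Definition fps_mul (f g : fps) : fps :=
  fun n => \sum_(i < n.+1) f i * g (n - i)%N.
Fixpoint fps_pow (f : fps) (k : nat) : fps :=
  if k is k'.+1 then fps_mul f (fps_pow f k') else fps_const 1.

Definition fps_exp (a : R) : fps := fun n => a ^+ n / (n`!)%:R.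

(* The formal sum  sum_{k>=0} c k * y^k , meaningful (a finite sum in each
   coefficient) when y has zero constant term: only k <= n contribute to the
   coefficient of t^n. *)
Definition fps_psum (c : nat -> R) (y : fps) : fps :=
  fun n => \sum_(k < n.+1) c k * fps_pow y k n.

(* Inverse of a series g with g 0 <> 0:
   1/g = g0^{-1} * sum_{k>=0} (1 - g/g0)^k. *)
Definition fps_inv (g : fps) : fps :=
  fps_scale (g 0%N)^-1
    (fps_psum (fun _ => 1) (fps_add (fps_const 1) (fps_opp (fps_scale (g 0%N)^-1 g)))).

Definition fps_shift (f : fps) : fps := fun n => f n.+1.

(* Quotient f / g of series with f 0 = 0 and g of valuation exactly 1
   (g 0 = 0, g 1 <> 0):  f/g = (f/t) * (g/t)^{-1}. *)
Definition fps_div (f g : fps) : fps := fps_mul (fps_shift f) (fps_inv (fps_shift g)).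

End FPS.

(* Bernoulli polynomials with parameter q:
   sum_n B_n^q(r) t^n/n! = q e^{rt}/(1 - e^{qt}) * sum_{k>=1} ((1-e^{qt})/q)^k / k *)
Definition qBernoulli_gf (R : realType) (q r : R) : fps R :=
  let E := fps_add (fps_const 1) (fps_opp (fps_exp q)) in
  let y := fps_scale q^-1 E in
  let S := fps_psum (fun k => if k is 0 then 0 else (k%:R)^-1) y in
  fps_div (fps_scale q (fps_mul (fps_exp r) S)) E.

Definition qBernoulli (R : realType) (q r : R) (n : nat) : R :=
  (n`!)%:R * qBernoulli_gf q r n.

(* r-Whitney numbers of the first kind: the coefficients w(n,k) in
   q^n (x)_n = sum_k w(n,k) (q x + r)^k.  Writing y = q x + r, i.e.
   x = (y - r)/q, w(n,k) is the coefficient of y^k in q^n ((y-r)/q)_n. *)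
Definition falling_poly (R : realType) (n : nat) : {poly R} :=
  \prod_(i < n) ('X - (i%:R)%:P).

Definition rWhitney1 (R : realType) (q r : R) (n k : nat) : R :=
  ((q ^+ n *: falling_poly R n) \Po (q^-1 *: ('X - r%:P)))`_k.

(* Main.v *)
Require Import Defs.
From mathcomp Require Import all_boot all_order all_algebra.
From mathcomp Require Import reals ring zify.
Set Implicit Arguments. Unset Strict Implicit. Unset Printing Implicit Defensive.
Import Order.TTheory GRing.Theory Num.Theory.
Local Open Scope ring_scope.

Section Work.
Variable R : realType.
Implicit Types (f g h : fps R) (A B C D : {poly R}).

Definition tr (N : nat) (f : fps R) : {poly R} := \poly_(i < N.+1) f i.
Definition eqm (N : nat) (A B : {poly R}) := forall k, (k <= N)%N -> A`_k = B`_k.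

Lemma trE N f k : (k <= N)%N -> (tr N f)`_k = f k.
Proof. by move=> kN; rewrite /tr coef_poly ltnS kN. Qed.

Lemma eqm_refl N A : eqm N A A. Proof. by []. Qed.
Lemma eqm_sym N A B : eqm N A B -> eqm N B A.
Proof. by move=> h k kN; rewrite h. Qed.
Lemma eqm_trans N A B C : eqm N A B -> eqm N B C -> eqm N A C.
Proof. by move=> h1 h2 k kN; rewrite h1 // h2. Qed.
Lemma eqm_le N M A B : (M <= N)%N -> eqm N A B -> eqm M A B.
Proof. by move=> MN h k kM; apply: h; apply: leq_trans MN. Qed.
Lemma eqmD N A B C D : eqm N A B -> eqm N C D -> eqm N (A + C) (B + D).
Proof. by move=> h1 h2 k kN; rewrite !coefD h1 // h2. Qed.
Lemma eqmN N A B : eqm N A B -> eqm N (- A) (- B).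
Proof. by move=> h k kN; rewrite !coefN h. Qed.
Lemma eqmM N A B C D : eqm N A B -> eqm N C D -> eqm N (A * C) (B * D).
Proof.
move=> h1 h2 k kN; rewrite !coefM; apply: eq_bigr => i _.
have ilt := ltn_ord i; rewrite h1 ?h2 //=; lia.
Qed.
Lemma eqmX N A B m : eqm N A B -> eqm N (A ^+ m) (B ^+ m).
Proof. by move=> h; elim: m => [|m ih]; rewrite ?expr0 // !exprS; apply: eqmM. Qed.
Lemma eqm_sum N (I : Type) (r : seq I) (F G : I -> {poly R}) :
  (forall i, eqm N (F i) (G i)) -> eqm N (\sum_(i <- r) F i) (\sum_(i <- r) G i).
Proof. by move=> h k kN; rewrite !coef_sum; apply: eq_bigr => i _; apply: h. Qed.
Lemma eqm_eq N A B : A = B -> eqm N A B. Proof. by move->. Qed.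

Lemma tr_mul N f g : eqm N (tr N (fps_mul f g)) (tr N f * tr N g).
Proof.
move=> k kN; rewrite trE // coefM /fps_mul; apply: eq_bigr => i _.
have ilt := ltn_ord i; rewrite !trE //=; lia.
Qed.

Lemma tr_add N f g : tr N (fps_add f g) = tr N f + tr N g.
Proof. by apply/polyP => k; rewrite coefD !coef_poly; case: ifP; rewrite ?addr0. Qed.
Lemma tr_opp N f : tr N (fps_opp f) = - tr N f.
Proof. by apply/polyP => k; rewrite coefN !coef_poly; case: ifP; rewrite ?oppr0. Qed.
Lemma tr_scale N c f : tr N (fps_scale c f) = c%:P * tr N f.
Proof. by apply/polyP => k; rewrite mul_polyC coefZ !coef_poly; case: ifP; rewrite ?mulr0. Qed.
Lemma tr_const N c : tr N (fps_const c) = c%:P.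
Proof. by apply/polyP => k; rewrite coefC coef_poly /fps_const; case: k => [|k] //=; case: ifP. Qed.

Lemma tr_pow N f m : eqm N (tr N (fps_pow f m)) (tr N f ^+ m).
Proof.
elim: m => [|m ih] /=; first by rewrite tr_const expr0; apply: eqm_refl.
rewrite exprS; eapply eqm_trans; first exact: tr_mul. exact: eqmM.
Qed.

Lemma pow_val f m n : f 0%N = 0 -> (n < m)%N -> fps_pow f m n = 0.
Proof.
move=> f0; elim: m n => [|m ih] n //= nm.
rewrite /fps_mul big1 // => [[i /= ilt]] _.
case: i ilt => [|i] ilt; first by rewrite f0 mul0r.
by rewrite ih ?mulr0 //; lia.
Qed.


Lemma tr_psum N c y : y 0%N = 0 ->
  eqm N (tr N (fps_psum c y)) (\sum_(k < N.+1) (c k)%:P * tr N y ^+ k).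
Proof.
move=> y0 n nN; rewrite trE // coef_sum /fps_psum.
have -> : \sum_(k < N.+1) ((c k)%:P * tr N y ^+ k)`_n = \sum_(k < N.+1) c k * fps_pow y k n.
  by apply: eq_bigr => k _; rewrite mul_polyC coefZ -tr_pow // trE.
rewrite (big_ord_widen N.+1 (fun k => c k * fps_pow y k n)) // big_mkcond /=.
apply: eq_bigr => k _; case: ifP => // /negbT; rewrite -leqNgt => kn.
by rewrite pow_val ?mulr0.
Qed.

Lemma tr_shift N f B : eqm N.+1 (tr N.+1 f) ('X * B) -> eqm N (tr N (fps_shift f)) B.
Proof.
move=> h k kN; rewrite trE // /fps_shift.
by have := h k.+1 kN; rewrite trE // coefXM.
Qed.

Lemma tr_le N M f : (M <= N)%N -> eqm M (tr N f) (tr M f).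
Proof. by move=> MN k kM; rewrite !trE //; apply: leq_trans MN. Qed.

Lemma coef_pow_fps A m n : (A ^+ m)`_n = fps_pow (fun k => A`_k) m n.
Proof.
elim: m n => [|m ih] n /=; first by rewrite expr0 coefC /fps_const; case: n.
by rewrite exprS coefM /fps_mul; apply: eq_bigr => i _; rewrite ih.
Qed.

Lemma polyval0 A m n : A`_0 = 0 -> (n < m)%N -> (A ^+ m)`_n = 0.
Proof. by move=> A0 nm; rewrite coef_pow_fps pow_val. Qed.

Lemma tr_inv N g : g 0%N != 0 -> eqm N (tr N (fps_inv g) * tr N g) 1.
Proof.
move=> g0n; set g0 := g 0%N.
set h := fps_add (fps_const 1) (fps_opp (fps_scale g0^-1 g)).
have h0 : h 0%N = 0 by rewrite /h /fps_add /fps_opp /fps_scale /= mulVf // subrr.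
set H := tr N h.
have Hdef : tr N g = g0%:P * (1 - H).
  rewrite /H /h tr_add tr_const tr_opp tr_scale polyC1 opprD opprK addrA subrr add0r.
  by rewrite mulrA -polyCM mulfV // polyC1 mul1r.
have e1 : eqm N (tr N (fps_inv g)) (g0^-1%:P * \sum_(k < N.+1) 1%:P * H ^+ k).
  rewrite /fps_inv tr_scale; apply: eqmM => //; exact: tr_psum.
eapply eqm_trans; first (apply: eqmM; [exact: e1 | exact: eqm_refl]).
rewrite Hdef.
have -> : g0^-1%:P * (\sum_(k < N.+1) 1%:P * H ^+ k) * (g0%:P * (1 - H)) = 1 - H ^+ N.+1.
  under eq_bigr do rewrite polyC1 mul1r.
  have := subrXX 1 H N.+1; rewrite expr1n => ->.
  under [X in _ = _ * X]eq_bigr do rewrite expr1n mul1r.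
  transitivity ((g0^-1 * g0)%:P * ((1 - H) * \sum_(i < N.+1) H ^+ i)); first by rewrite polyCM; ring.
  by rewrite mulVf // polyC1 mul1r.
move=> k kN; rewrite coefB polyval0 ?subr0 //.
by rewrite /H trE.
Qed.


Lemma fact_neq0 k : (k`!)%:R != 0 :> R.
Proof. by rewrite pnatr_eq0 -lt0n fact_gt0. Qed.

Lemma tr_exp_mul N a b :
  eqm N (tr N (fps_exp a) * tr N (fps_exp b)) (tr N (fps_exp (a + b))).
Proof.
move=> k kN; rewrite coefM trE // /fps_exp addrC exprDn mulr_suml.
apply: eq_bigr => -[i /=]; rewrite ltnS => ik _.
rewrite !trE //; try lia.
have hb : ('C(k, i))%:R = (k`!)%:R / ((i`!)%:R * ((k - i)`!)%:R) :> R.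
  by rewrite -(bin_fact ik) !natrM; field; rewrite !fact_neq0.
rewrite -[X in _ = X / _]mulr_natr hb; field.
by rewrite !fact_neq0.
Qed.

Lemma tr_exp0 N : tr N (fps_exp 0) = 1.
Proof.
apply/polyP => k; rewrite coef_poly coefC /fps_exp.
by case: k => [|k] /=; rewrite ?expr0 ?fact0 ?divr1 // expr0n mul0r; case: ifP.
Qed.

Lemma tr_exp_pow N a i : eqm N (tr N (fps_exp a) ^+ i) (tr N (fps_exp (i%:R * a))).
Proof.
elim: i => [|i ih]; first by rewrite expr0 mul0r tr_exp0.
rewrite exprS; eapply eqm_trans; first (apply: eqmM; [exact: eqm_refl | exact: ih]).
eapply eqm_trans; first exact: tr_exp_mul.
by apply: eqm_eq; rewrite mulrS mulrDl mul1r.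
Qed.


Lemma B_formula (q r : R) N : q != 0 ->
  eqm N (tr N (qBernoulli_gf q r))
    (tr N (fps_exp r) * \sum_(m < N.+1) ((m.+1)%:R^-1)%:P *
        (q^-1%:P * (1 - tr N (fps_exp q))) ^+ m).
Proof.
move=> qn.
rewrite /qBernoulli_gf.
set E := fps_add (fps_const 1) (fps_opp (fps_exp q)).
set y := fps_scale q^-1 E.
set c := fun k : nat => _.
set S := fps_psum c y.
have e0 : fps_exp q 0%N = 1 by rewrite /fps_exp expr0 fact0 divr1.
have y0 : y 0%N = 0 by rewrite /y /E /fps_scale /fps_add /fps_opp e0 /= subrr mulr0.
set Y1 := tr N (fps_shift y).
have hY : tr N.+1 y = 'X * Y1.
  apply/polyP => k; rewrite coefXM /Y1 /tr !coef_poly.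
  by case: k => [|k] //=; rewrite y0.
set Sum := \sum_(m < N.+1) ((m.+1)%:R^-1)%:P * ('X * Y1) ^+ m.
have hS : eqm N.+1 (tr N.+1 S) ('X * (Y1 * Sum)).
  eapply eqm_trans; first exact: tr_psum.
  apply: eqm_eq; rewrite big_ord_recl /= /c polyC0 mul0r add0r /Sum !mulr_sumr.
  apply: eq_bigr => i _; rewrite /bump /= add1n exprS; rewrite hY; ring.
set F := fps_scale q (fps_mul (fps_exp r) S).
set T1 := tr N.+1 (fps_exp r).
have hF : eqm N.+1 (tr N.+1 F) ('X * (q%:P * T1 * (Y1 * Sum))).
  rewrite /F tr_scale.
  eapply eqm_trans; first (apply: eqmM; [exact: eqm_refl | exact: tr_mul]).
  eapply eqm_trans; first (apply: eqmM; [exact: eqm_refl | apply: eqmM; [exact: eqm_refl | exact: hS]]).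
  by apply: eqm_eq; rewrite /T1; ring.
have hF' := tr_shift hF.
have hE : tr N (fps_shift E) = q%:P * Y1.
  apply/polyP => k; rewrite mul_polyC coefZ /Y1 /tr !coef_poly.
  by case: ifP; rewrite ?mulr0 // /fps_shift /y /fps_scale mulVKf.
have E10 : fps_shift E 0%N != 0.
  by rewrite /fps_shift /E /fps_add /fps_opp /fps_const /fps_exp expr1 (_ : 1`! = 1%N) // divr1 add0r oppr_eq0.
have hI : eqm N (tr N (fps_inv (fps_shift E)) * (q%:P * Y1)) 1 by rewrite -hE; exact: tr_inv.
rewrite /fps_div.
eapply eqm_trans; first exact: tr_mul.
eapply eqm_trans; first (apply: eqmM; [exact: hF' | exact: eqm_refl]).
set Inv := tr N (fps_inv (fps_shift E)).
have -> : q%:P * T1 * (Y1 * Sum) * Inv = T1 * Sum * (Inv * (q%:P * Y1)) by ring.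
eapply eqm_trans; first (apply: eqmM; [exact: eqm_refl | exact: hI]).
rewrite mulr1; apply: eqmM; first exact: tr_le.
apply: eqm_sum => m; apply: eqmM => //; apply: eqmX.
rewrite -hY; eapply eqm_trans; first exact: tr_le.
by apply: eqm_eq; rewrite /y tr_scale /E tr_add tr_opp tr_const polyC1.
Qed.

Definition Lf n (P A : {poly R}) := \sum_(j < n.+1) P`_j * ((j`!)%:R * A`_j).

Lemma Lf_eqm n P A B : eqm n A B -> Lf n P A = Lf n P B.
Proof. by move=> h; apply: eq_bigr => -[j /=] jn _; rewrite h. Qed.

Lemma Lf_sum n P (I : Type) (s : seq I) (F : I -> {poly R}) :
  Lf n P (\sum_(i <- s) F i) = \sum_(i <- s) Lf n P (F i).
Proof.
rewrite /Lf exchange_big /=; apply: eq_bigr => j _.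
by rewrite coef_sum !mulr_sumr.
Qed.

Lemma Lf_scale n P c A : Lf n P (c%:P * A) = c * Lf n P A.
Proof.
rewrite /Lf mulr_sumr; apply: eq_bigr => j _.
by rewrite mul_polyC coefZ; ring.
Qed.

Lemma Lf_exp n (P : {poly R}) a : (size P <= n.+1)%N -> Lf n P (tr n (fps_exp a)) = P.[a].
Proof.
move=> sP; rewrite (horner_coef_wide _ sP); apply: eq_bigr => -[j /=] jn _.
rewrite trE // /fps_exp; congr (_ * _); rewrite mulrCA mulfV ?mulr1 //; exact: fact_neq0.
Qed.


Lemma TY_expand N (r q : R) m :
  eqm N (tr N (fps_exp r) * (q^-1%:P * (1 - tr N (fps_exp q))) ^+ m)
    (\sum_(i < m.+1) (q^-1 ^+ m * (-1) ^+ i * ('C(m, i))%:R)%:P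
        * tr N (fps_exp (r + i%:R * q))).
Proof.
set Eq := tr N (fps_exp q); set T := tr N (fps_exp r).
have -> : T * (q^-1%:P * (1 - Eq)) ^+ m =
    \sum_(i < m.+1) (q^-1 ^+ m * (-1) ^+ i * ('C(m, i))%:R)%:P * (T * Eq ^+ i).
  rewrite exprMn exprBn mulrA mulr_sumr; apply: eq_bigr => i _.
  rewrite expr1n mulr1 -mulr_natr !rmorphM /= rmorphXn rmorphXn rmorphN rmorph1 rmorph_nat /=.
  ring.
apply: eqm_sum => i; apply: eqmM => //.
eapply eqm_trans; first (apply: eqmM; [exact: eqm_refl | exact: tr_exp_pow]).
exact: tr_exp_mul.
Qed.

End Work.

Unset Implicit Arguments.
Set Strict Implicit.

Theorem mainTheorem2 (R : realType) (q r : R) (hq : 0 < q) (hr : 0 <= r) (n : nat) :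
  \sum_(j < n.+1) (-1) ^+ n * rWhitney1 q r n j * qBernoulli q r j
  = (n`!)%:R / (n.+1)%:R.
Proof.
have qn : q != 0 by rewrite gt_eqF.
set P := (q ^+ n *: falling_poly R n) \Po (q^-1 *: ('X - r%:P)).
have sP : (size P <= n.+1)%N.
  apply: leq_trans (size_comp_poly_leq _ _) _; rewrite ltnS.
  have h1' : (size (q ^+ n *: falling_poly R n) <= n.+1)%N.
    apply: leq_trans (size_scale_leq _ _) _.
    by rewrite /falling_poly size_prod_XsubC [index_enum _]unlock -enumT size_enum_ord.
  have h2' : (size (q^-1 *: ('X - r%:P)) <= 2)%N.
    by apply: leq_trans (size_scale_leq _ _) _; rewrite size_XsubC.
  have h1 : ((size (q ^+ n *: falling_poly R n)).-1 <= n)%N by lia.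
  have h2 : ((size (q^-1 *: ('X - r%:P))).-1 <= 1)%N by lia.
  by apply: leq_trans (leq_mul h1 h2) _; rewrite muln1.
have hP : forall x, P.[x] = q ^+ n * \prod_(k < n) (q^-1 * (x - r) - k%:R).
  move=> x; rewrite horner_comp hornerZ /falling_poly horner_prod hornerZ hornerXsubC.
  by congr (_ * _); apply: eq_bigr => k _; rewrite hornerXsubC.
set G := qBernoulli_gf q r.
have -> : \sum_(j < n.+1) (-1) ^+ n * rWhitney1 q r n j * qBernoulli q r j
    = (-1) ^+ n * Lf n P (tr n G).
  rewrite /Lf mulr_sumr; apply: eq_bigr => -[j jn] _ /=.
  by rewrite /rWhitney1 -/P /qBernoulli trE // -/G; ring.
rewrite (Lf_eqm _ (@B_formula _ q r n qn)) [tr n (fps_exp r) * _]mulr_sumr Lf_sum.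
have hi : forall i : nat, q^-1 * (r + i%:R * q - r) = i%:R by move=> i; field.
under eq_bigr => m _.
  rewrite mulrCA Lf_scale (Lf_eqm _ (@TY_expand _ n r q m)) Lf_sum.
  under eq_bigr => i _ do rewrite Lf_scale Lf_exp // hP hi.
  over.
have Z0 : forall i : nat, (i < n)%N -> \prod_(k < n) (i%:R - k%:R : R) = 0.
  by move=> i lt; rewrite (bigD1 (Ordinal lt)) //= subrr mul0r.
have Zn : \prod_(k < n) (n%:R - k%:R : R) = (n`!)%:R.
  rewrite -ffactnn ffact_prod natr_prod; apply: eq_bigr => k _.
  by rewrite natrB // ltnW.
rewrite big_ord_recr /= big1 ?add0r; last first.
  move=> [m /= mn] _; rewrite big1 ?mulr0 // => -[i /= im] _.
  by rewrite Z0 ?mulr0 //; lia.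
rewrite big_ord_recr /= big1 ?add0r; last first.
  by move=> [i /= im] _; rewrite Z0 ?mulr0.
rewrite Zn binn.
have s1 : (-1) ^+ n * (-1) ^+ n = 1 :> R by rewrite -exprMn mulrNN mulr1 expr1n.
have s2 : q^-1 ^+ n * q ^+ n = 1 by rewrite exprVn mulVf // expf_neq0.
transitivity (((-1) ^+ n * (-1) ^+ n) * (q^-1 ^+ n * q ^+ n) * ((n`!)%:R / (n.+1)%:R)); first by ring.
by rewrite s1 s2 !mul1r.
Qed.
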